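(* There exist positive bounded operators $A,B\colon\ell^2\to\ell^2$ such that $AB-BA=I+N$, where $N$ is a nilpotent operator of nil-index $3$ (i.e. $N^3=0$ and $N^2\neq0$). Furthermore, there is an absolute constant $K>0$ such that for every $\varepsilon\in(0,1)$ the operators $A$, $B$ (positive, with $AB-BA=I+N$ and $N$ nilpotent of nil-index $3$) can be chosen so that $\|A\|\leq K\varepsilon^{-3}$, $\|B\|\leq K\varepsilon^{-3}$ and $\|N\|\leq K\varepsilon$.
   Context: $\ell^2$ is the real Hilbert lattice of square-summable sequences with the coordinatewise order; an operator on $\ell^2$ is positive if it maps nonnegative sequences to nonnegative sequences. $I$ is the identity operator and $\|\cdot\|$ the operator norm. *)

(* Defs.v *)
From Stdlib Require Import Reals.
From Coquelicot Require Import Coquelicot.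
Open Scope R_scope.

Definition seqR := nat -> R.

Definition l2 (x : seqR) : Prop := ex_series (fun n => (x n) ^ 2).

Definition l2norm (x : seqR) : R := sqrt (Series (fun n => (x n) ^ 2)).

(* An operator on ell^2, represented by a map on sequences whose behaviour
   is only relevant on ell^2. *)
Definition op := seqR -> seqR.

Definition bounded_op (T : op) : Prop :=
  (forall x, l2 x -> l2 (T x)) /\
  (forall (x y : seqR) (a b : R), l2 x -> l2 y ->
     T (fun n => a * x n + b * y n) = (fun n => a * T x n + b * T y n)) /\
  (exists C : R, forall x, l2 x -> l2norm (T x) <= C * l2norm x).

Definition positive_op (T : op) : Prop :=
  forall x, l2 x -> (forall n, 0 <= x n) -> forall n, 0 <= T x n.

Definition opnorm_le (T : op) (M : R) : Prop :=
  forall x, l2 x -> l2norm (T x) <= M * l2norm x.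

Definition commutator_eq (A B N : op) : Prop :=
  forall x, l2 x -> (fun n => A (B x) n - B (A x) n) = (fun n => x n + N x n).

Definition nilpotent_index3 (N : op) : Prop :=
  (forall x, l2 x -> N (N (N x)) = (fun _ => 0)) /\
  (exists x, l2 x /\ N (N x) <> (fun _ => 0)).

(* Main.v *)
Require Import Defs.
From Stdlib Require Import Reals Lra Lia Arith FunctionalExtensionality.
From Coquelicot Require Import Coquelicot.
Open Scope R_scope.

Lemma cv_le (u : nat -> R) l M : Un_cv u l -> (forall n, u n <= M) -> l <= M.
Proof.
  intros H HM. destruct (Rle_dec l M) as [h|h]; auto.
  exfalso. destruct (H (l - M)) as [N HN]; [lra|].
  specialize (HN N (le_n N)). specialize (HM N). unfold R_dist in HN.
  apply Rabs_def2 in HN. lra.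
Qed.

Lemma series_bound (f : nat -> R) M : (forall n, 0 <= f n) ->
  (forall N, sum_f_R0 f N <= M) -> ex_series f /\ Series f <= M.
Proof.
  intros Hp HM.
  assert (G : Un_growing (fun N => sum_f_R0 f N)).
  { intro n. simpl. specialize (Hp (S n)). lra. }
  assert (U : has_ub (fun N => sum_f_R0 f N)).
  { exists M. intros y [n ->]. apply HM. }
  destruct (growing_cv _ G U) as [l Hl].
  split. apply ex_series_Reals_1. exists l; exact Hl.
  rewrite (is_series_unique f l). 2:{ apply is_series_Reals. exact Hl. }
  apply (cv_le _ _ _ Hl HM).
Qed.

Lemma partial_le (f : nat -> R) N : (forall n, 0 <= f n) -> ex_series f ->
  sum_f_R0 f N <= Series f.
Proof.
  intros Hp Hf. apply Series_correct in Hf. apply is_series_Reals in Hf.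
  pose proof (is_series_unique f (Series f)) as E.
  apply sum_incr; auto.
Qed.

Lemma sum_mono (f : nat -> R) M M' : (forall n, 0 <= f n) -> (M <= M')%nat ->
  sum_f_R0 f M <= sum_f_R0 f M'.
Proof.
  intros Hp H. induction H. lra. simpl. specialize (Hp (S m)). lra.
Qed.

Lemma sum_nonneg (f : nat -> R) M : (forall n, 0 <= f n) -> 0 <= sum_f_R0 f M.
Proof. intros Hp. induction M; simpl; [apply Hp| specialize (Hp (S M)); lra]. Qed.

Definition Dom (T : op) (C : R) : Prop := 0 <= C /\
  forall x, l2 x -> forall N, exists M,
    sum_f_R0 (fun n => T x n ^ 2) N <= C * sum_f_R0 (fun n => x n ^ 2) M.

Lemma sq_nonneg (x : seqR) n : 0 <= x n ^ 2.
Proof. nra. Qed.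

Lemma Dom_l2 T C x : Dom T C -> l2 x ->
  l2 (T x) /\ Series (fun n => T x n ^ 2) <= C * Series (fun n => x n ^ 2).
Proof.
  intros [HC HT] Hx. apply series_bound. intro; apply sq_nonneg.
  intro N. destruct (HT x Hx N) as [M HM].
  eapply Rle_trans; [exact HM|]. apply Rmult_le_compat_l; auto.
  apply partial_le; auto. intro; apply sq_nonneg.
Qed.

Lemma Dom_norm T C x : Dom T C -> l2 x -> l2norm (T x) <= sqrt C * l2norm x.
Proof.
  intros HD Hx. destruct (Dom_l2 T C x HD Hx) as [_ H].
  unfold l2norm. rewrite <- sqrt_mult_alt by (apply HD).
  apply sqrt_le_1_alt. exact H.
Qed.

Lemma Dom_le T C C' : Dom T C -> C <= C' -> Dom T C'.
Proof.
  intros [HC HT] Hle. split. lra. intros x Hx N. destruct (HT x Hx N) as [M HM].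
  exists M. eapply Rle_trans; [exact HM|]. apply Rmult_le_compat_r; auto.
  apply sum_nonneg. intro; apply sq_nonneg.
Qed.

Lemma Dom_ext T T' C : (forall x n, T x n = T' x n) -> Dom T C -> Dom T' C.
Proof.
  intros E [HC HT]. split; auto. intros x Hx N. destruct (HT x Hx N) as [M HM].
  exists M. eapply Rle_trans; [|exact HM]. right. apply sum_eq. intros. rewrite E. auto.
Qed.

Definition Comp (S T : op) : op := fun x => S (T x).
Definition Plus (S T : op) : op := fun x n => S x n + T x n.
Definition Diag (w : nat -> R) : op := fun x n => w n * x n.
Definition Down (l : nat) : op := fun x n => x (2 * n + l)%nat.
Definition Up (d : nat) : op := fun y n => if Nat.eqb (n mod 4) d then y (n / 4)%nat else 0.

Lemma Dom_comp S T C1 C2 : Dom S C1 -> Dom T C2 -> Dom (Comp S T) (C1 * C2).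
Proof.
  intros [H1 HS] [H2 HT]. split. nra. intros x Hx N.
  destruct (Dom_l2 T C2 x (conj H2 HT) Hx) as [HTx _].
  destruct (HS (T x) HTx N) as [M HM]. destruct (HT x Hx M) as [M' HM'].
  exists M'. unfold Comp. eapply Rle_trans; [exact HM|]. rewrite Rmult_assoc.
  apply Rmult_le_compat_l; auto.
Qed.

Lemma Dom_plus S T C1 C2 : Dom S C1 -> Dom T C2 -> Dom (Plus S T) (2 * C1 + 2 * C2).
Proof.
  intros [H1 HS] [H2 HT]. split. nra. intros x Hx N.
  destruct (HS x Hx N) as [M1 HM1]. destruct (HT x Hx N) as [M2 HM2].
  exists (max M1 M2). unfold Plus.
  apply Rle_trans with (2 * sum_f_R0 (fun n => S x n ^ 2) N + 2 * sum_f_R0 (fun n => T x n ^ 2) N).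
  { rewrite !scal_sum, <- plus_sum. apply sum_Rle. intros n _. cbv beta. pose proof (pow2_ge_0 (S x n - T x n)). nra. }
  assert (P1 : sum_f_R0 (fun n => x n ^ 2) M1 <= sum_f_R0 (fun n => x n ^ 2) (max M1 M2))
    by (apply sum_mono; [intro; apply sq_nonneg| lia]).
  assert (P2 : sum_f_R0 (fun n => x n ^ 2) M2 <= sum_f_R0 (fun n => x n ^ 2) (max M1 M2))
    by (apply sum_mono; [intro; apply sq_nonneg| lia]).
  nra.
Qed.

Lemma Dom_diag w W : (forall n, Rabs (w n) <= W) -> Dom (Diag w) (W ^ 2).
Proof.
  intros HW. split. apply pow2_ge_0. intros x Hx N. exists N. unfold Diag.
  rewrite scal_sum. apply sum_Rle. intros n _.
  specialize (HW n). rewrite Rpow_mult_distr.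
  rewrite <- (pow2_abs (w n)). rewrite (Rmult_comm (x n ^ 2)).
  apply Rmult_le_compat_r. apply pow2_ge_0. pose proof (Rabs_pos (w n)). nra.
Qed.

Lemma Dom_down l : (l <= 1)%nat -> Dom (Down l) 1.
Proof.
  intros Hl. split. lra. intros x Hx N. exists (2 * N + 1)%nat. rewrite Rmult_1_l.
  unfold Down. induction N.
  - simpl. pose proof (sq_nonneg x 0%nat). pose proof (sq_nonneg x 1%nat).
    destruct l as [|[|]]; simpl; try lia; lra.
  - replace (2 * S N + 1)%nat with (S (S (2 * N + 1))) by lia.
    rewrite !tech5.
    pose proof (sq_nonneg x (S (2 * N + 1))). pose proof (sq_nonneg x (S (S (2 * N + 1)))).
    destruct l as [|[|]]; try lia.
    + replace (2 * S N + 0)%nat with (S (2 * N + 1)) by lia. lra.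
    + replace (2 * S N + 1)%nat with (S (S (2 * N + 1))) by lia. lra.
Qed.

Lemma dm4 q d : (d < 4)%nat -> ((4*q+d)/4 = q)%nat /\ ((4*q+d) mod 4 = d)%nat.
Proof.
  intros. split; [symmetry; apply Nat.div_unique with d | symmetry; apply Nat.mod_unique with q]; lia.
Qed.

Lemma Up_val d y q r : (r < 4)%nat -> Up d y (4*q+r)%nat = if Nat.eqb r d then y q else 0.
Proof. intros H. unfold Up. destruct (dm4 q r H) as [-> ->]. reflexivity. Qed.

Lemma sum4 (f : nat -> R) k : sum_f_R0 f (S (S (S (S k)))) =
  sum_f_R0 f k + f (S k) + f (S (S k)) + f (S (S (S k))) + f (S (S (S (S k)))).
Proof. reflexivity. Qed.

Lemma Dom_up d : (d < 4)%nat -> Dom (Up d) 1.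
Proof.
  intros Hd. split. lra. intros y Hy N.
  assert (K : forall q, sum_f_R0 (fun n => Up d y n ^ 2) (4 * q + 3) = sum_f_R0 (fun n => y n ^ 2) q).
  { induction q.
    - replace (4 * 0 + 3)%nat with 3%nat by lia. simpl. unfold Up. simpl.
      destruct d as [|[|[|[|]]]]; simpl; try lia; ring.
    - replace (4 * S q + 3)%nat with (S (S (S (S (4 * q + 3))))) by lia.
      rewrite sum4, IHq. rewrite tech5.
      replace (S (4 * q + 3)) with (4 * S q + 0)%nat by lia.
      replace (S (4 * S q + 0)) with (4 * S q + 1)%nat by lia.
      replace (S (4 * S q + 1)) with (4 * S q + 2)%nat by lia.
      replace (S (4 * S q + 2)) with (4 * S q + 3)%nat by lia.
      rewrite !Up_val by lia.
      destruct d as [|[|[|[|]]]]; simpl; try lia; ring. }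
  exists N. rewrite Rmult_1_l, <- K. apply sum_mono. intro; apply sq_nonneg. lia.
Qed.

Definition lin (T : op) : Prop := forall x y a b,
  T (fun n => a * x n + b * y n) = (fun n => a * T x n + b * T y n).
Definition pos (T : op) : Prop := forall x, (forall n, 0 <= x n) -> forall n, 0 <= T x n.

Lemma lin_down l : lin (Down l).
Proof. intros x y a b. reflexivity. Qed.
Lemma lin_up d : lin (Up d).
Proof. intros x y a b. apply functional_extensionality. intro n. unfold Up.
  destruct (Nat.eqb _ _); ring. Qed.
Lemma lin_diag w : lin (Diag w).
Proof. intros x y a b. apply functional_extensionality. intro n. unfold Diag. ring. Qed.
Lemma lin_plus S T : lin S -> lin T -> lin (Plus S T).
Proof. intros HS HT x y a b. apply functional_extensionality. intro n. unfold Plus.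
  rewrite HS, HT. ring. Qed.
Lemma lin_comp S T : lin S -> lin T -> lin (Comp S T).
Proof. intros HS HT x y a b. unfold Comp. rewrite HT, HS. reflexivity. Qed.

Lemma pos_down l : pos (Down l).
Proof. intros x Hx n. apply Hx. Qed.
Lemma pos_up d : pos (Up d).
Proof. intros x Hx n. unfold Up. destruct (Nat.eqb _ _); [apply Hx|lra]. Qed.
Lemma pos_diag w : (forall n, 0 <= w n) -> pos (Diag w).
Proof. intros Hw x Hx n. unfold Diag. specialize (Hw n); specialize (Hx n). nra. Qed.
Lemma pos_plus S T : pos S -> pos T -> pos (Plus S T).
Proof. intros HS HT x Hx n. unfold Plus. specialize (HS x Hx n); specialize (HT x Hx n). lra. Qed.
Lemma pos_comp S T : pos S -> pos T -> pos (Comp S T).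
Proof. intros HS HT x Hx n. unfold Comp. apply HS. apply HT. exact Hx. Qed.

Lemma bounded_of T C : Dom T C -> lin T -> bounded_op T.
Proof.
  intros HD HL. split; [|split].
  - intros x Hx. apply (Dom_l2 T C x HD Hx).
  - intros x y a b _ _. apply HL.
  - exists (sqrt C). intros x Hx. apply Dom_norm; auto.
Qed.

Lemma l2norm_pos x : 0 <= l2norm x.
Proof. apply sqrt_pos. Qed.

Lemma opnorm_of T C M : Dom T C -> sqrt C <= M -> opnorm_le T M.
Proof.
  intros HD HM x Hx. eapply Rle_trans. apply Dom_norm; eauto.
  apply Rmult_le_compat_r. apply l2norm_pos. exact HM.
Qed.

Lemma sqrt_le_of C M : 0 <= M -> C <= M ^ 2 -> sqrt C <= M.
Proof.
  intros HM H. rewrite <- (sqrt_pow2 M HM). apply sqrt_le_1_alt. exact H.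
Qed.

Definition Aop : op := Plus (Down 0) (Down 1).
Definition Bop : op := Plus (Comp (Up 0) (Down 0)) (Plus (Comp (Up 1) (Down 0))
   (Plus (Comp (Up 2) (Down 0)) (Plus (Comp (Up 2) (Down 1)) (Comp (Up 3) (Down 1))))).
Definition N0 : op := fun y n =>
  if Nat.eqb (n mod 4) 0 then - y (n + 1)%nat
  else if Nat.eqb (n mod 4) 2 then - (y (n - 2)%nat + y (n - 1)%nat + y (n + 1)%nat)
  else 0.

Lemma decomp4 n : exists q r, (r < 4)%nat /\ n = (4 * q + r)%nat.
Proof. exists (n / 4)%nat, (n mod 4)%nat. split. apply Nat.mod_upper_bound; lia.
  apply Nat.div_mod. lia. Qed.

Ltac fixidx y q := repeat match goal with |- context [y ?i] =>
  lazymatch i with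
  | (4 * q + _)%nat => fail
  | _ => first [ replace i with (4 * q + 0)%nat by lia
               | replace i with (4 * q + 1)%nat by lia
               | replace i with (4 * q + 2)%nat by lia
               | replace i with (4 * q + 3)%nat by lia ]
  end end.

Lemma B0 y q : Bop y (4 * q + 0)%nat = y (2 * q + 0)%nat.
Proof. unfold Bop, Plus, Comp. rewrite !Up_val by lia. cbn [Nat.eqb]. unfold Down. ring. Qed.
Lemma B1 y q : Bop y (4 * q + 1)%nat = y (2 * q + 0)%nat.
Proof. unfold Bop, Plus, Comp. rewrite !Up_val by lia. cbn [Nat.eqb]. unfold Down. ring. Qed.
Lemma B2 y q : Bop y (4 * q + 2)%nat = y (2 * q + 0)%nat + y (2 * q + 1)%nat.
Proof. unfold Bop, Plus, Comp. rewrite !Up_val by lia. cbn [Nat.eqb]. unfold Down. ring. Qed.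
Lemma B3 y q : Bop y (4 * q + 3)%nat = y (2 * q + 1)%nat.
Proof. unfold Bop, Plus, Comp. rewrite !Up_val by lia. cbn [Nat.eqb]. unfold Down. ring. Qed.

Lemma N0_0 y q : N0 y (4 * q + 0)%nat = - y (4 * q + 1)%nat.
Proof. unfold N0. rewrite (proj2 (dm4 q 0 ltac:(lia))). cbn [Nat.eqb]. fixidx y q. ring. Qed.
Lemma N0_1 y q : N0 y (4 * q + 1)%nat = 0.
Proof. unfold N0. rewrite (proj2 (dm4 q 1 ltac:(lia))). cbn [Nat.eqb]. ring. Qed.
Lemma N0_2 y q : N0 y (4 * q + 2)%nat = - (y (4 * q + 0)%nat + y (4 * q + 1)%nat + y (4 * q + 3)%nat).
Proof. unfold N0. rewrite (proj2 (dm4 q 2 ltac:(lia))). cbn [Nat.eqb]. fixidx y q. ring. Qed.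
Lemma N0_3 y q : N0 y (4 * q + 3)%nat = 0.
Proof. unfold N0. rewrite (proj2 (dm4 q 3 ltac:(lia))). cbn [Nat.eqb]. ring. Qed.

Lemma comm y n : Aop (Bop y) n - Bop (Aop y) n = y n + N0 y n.
Proof.
  destruct (decomp4 n) as [q [r [Hr ->]]].
  unfold Aop at 1. unfold Plus at 1. unfold Down.
  destruct r as [|[|[|[|]]]]; try lia.
  - replace (2 * (4 * q + 0) + 0)%nat with (4 * (2 * q) + 0)%nat by lia.
    replace (2 * (4 * q + 0) + 1)%nat with (4 * (2 * q) + 1)%nat by lia.
    rewrite B0, B1, B0, N0_0. unfold Aop, Plus, Down. fixidx y q. ring.
  - replace (2 * (4 * q + 1) + 0)%nat with (4 * (2 * q) + 2)%nat by lia.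
    replace (2 * (4 * q + 1) + 1)%nat with (4 * (2 * q) + 3)%nat by lia.
    rewrite B2, B3, B1, N0_1. unfold Aop, Plus, Down. fixidx y q. ring.
  - replace (2 * (4 * q + 2) + 0)%nat with (4 * (2 * q + 1) + 0)%nat by lia.
    replace (2 * (4 * q + 2) + 1)%nat with (4 * (2 * q + 1) + 1)%nat by lia.
    rewrite B0, B1, B2, N0_2. unfold Aop, Plus, Down. fixidx y q. ring.
  - replace (2 * (4 * q + 3) + 0)%nat with (4 * (2 * q + 1) + 2)%nat by lia.
    replace (2 * (4 * q + 3) + 1)%nat with (4 * (2 * q + 1) + 3)%nat by lia.
    rewrite B2, B3, B3, N0_3. unfold Aop, Plus, Down. fixidx y q. ring.
Qed.

Lemma N0cube u n : N0 (N0 (N0 u)) n = 0.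
Proof.
  destruct (decomp4 n) as [q [r [Hr ->]]].
  destruct r as [|[|[|[|]]]]; try lia;
  repeat (rewrite ?N0_0, ?N0_1, ?N0_2, ?N0_3); ring.
Qed.

Definition wt (t : R) (d : nat) : R :=
  match d with 0%nat => / t | 1%nat => / (t * t) | 2%nat => 1 | _ => / (t * t) end.
Definition w (t : R) (n : nat) : R := wt t (n mod 4).
Definition wi (t : R) (n : nat) : R := / w t n.

Lemma helper_s s c : 1 <= s -> 0 <= c <= 10000 -> (s * s) ^ 2 * c <= (100 * s ^ 3) ^ 2.
Proof.
  intros Hs Hc. replace ((100 * s ^ 3) ^ 2) with ((s * s) ^ 2 * (10000 * (s * s))) by ring.
  apply Rmult_le_compat_l. apply pow2_ge_0. nra.
Qed.

Lemma helper_s0 s : 1 <= s -> 0 <= 100 * s ^ 3.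
Proof. intros. pose proof (pow_le s 3). nra. Qed.

Section W.
Variable t : R.
Hypothesis Ht : 0 < t <= 1.

Lemma wt_bounds d : 1 <= wt t d <= / (t * t).
Proof.
  assert (H1 : 1 <= / t). { rewrite <- Rinv_1. apply Rinv_le_contravar; lra. }
  assert (H2 : / t <= / (t * t)). { apply Rinv_le_contravar; nra. }
  destruct d as [|[|[|]]]; simpl; lra.
Qed.

Lemma w_bounds n : 1 <= w t n <= / (t * t).
Proof. apply wt_bounds. Qed.

Lemma wi_bounds n : 0 < wi t n <= 1.
Proof. unfold wi. pose proof (w_bounds n). split.
  apply Rinv_0_lt_compat; lra. rewrite <- Rinv_1. apply Rinv_le_contravar; lra. Qed.

Lemma cancel z : Diag (wi t) (Diag (w t) z) = z.
Proof. apply functional_extensionality. intro n. unfold Diag, wi.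
  pose proof (w_bounds n). field. lra. Qed.

Definition A' : op := Comp (Diag (w t)) (Comp Aop (Diag (wi t))).
Definition B' : op := Comp (Diag (w t)) (Comp Bop (Diag (wi t))).
Definition N' : op := Comp (Diag (w t)) (Comp N0 (Diag (wi t))).

Lemma comm' x : (fun n => A' (B' x) n - B' (A' x) n) = (fun n => x n + N' x n).
Proof.
  apply functional_extensionality. intro n. unfold A', B', N', Comp.
  rewrite !cancel. set (u := Diag (wi t) x). unfold Diag at 1 2 3.
  rewrite <- Rmult_minus_distr_l, comm. subst u. unfold Diag, wi.
  pose proof (w_bounds n). field. lra.
Qed.

Lemma nil3 x : N' (N' (N' x)) = (fun _ => 0).
Proof.
  apply functional_extensionality. intro n. unfold N', Comp.
  rewrite !cancel. unfold Diag at 1. rewrite N0cube. ring.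
Qed.

Definition e1 : seqR := fun n => if Nat.eqb n 1 then 1 else 0.

Lemma l2_e1 : l2 e1.
Proof.
  refine (proj1 (series_bound _ 1 _ _)). intro; apply sq_nonneg.
  intro N. induction N. unfold e1; simpl. lra.
  rewrite tech5. destruct N. unfold e1; simpl. lra.
  unfold e1 at 2. simpl Nat.eqb. lra.
Qed.

Lemma nil2 : N' (N' e1) <> (fun _ => 0).
Proof.
  intro H. assert (E := f_equal (fun f => f (4 * 0 + 2)%nat) H). cbv beta in E.
  unfold N', Comp in E. rewrite cancel in E. unfold Diag at 1 in E.
  rewrite N0_2, N0_0, N0_1, N0_3 in E. unfold Diag, wi, w, e1 in E. simpl in E.
  rewrite Rinv_inv in E. nra.
Qed.

Definition Nexp : op :=
  Plus (Comp (Up 0) (Comp (Diag (fun _ => - t)) (Comp (Down 0) (Down 1))))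
   (Comp (Up 2) (Plus (Comp (Diag (fun _ => - t)) (Comp (Down 0) (Down 0)))
     (Plus (Comp (Diag (fun _ => - (t * t))) (Comp (Down 0) (Down 1)))
           (Comp (Diag (fun _ => - (t * t))) (Comp (Down 1) (Down 1)))))).

Lemma w_val q r : (r < 4)%nat -> w t (4 * q + r)%nat = wt t r.
Proof. intros. unfold w. rewrite (proj2 (dm4 q r H)). reflexivity. Qed.

Lemma Nexp_eq x n : N' x n = Nexp x n.
Proof.
  destruct (decomp4 n) as [q [r [Hr ->]]].
  unfold N', Comp. unfold Diag at 1.
  destruct r as [|[|[|[|]]]]; try lia;
  [rewrite N0_0 | rewrite N0_1 | rewrite N0_2 | rewrite N0_3];
  unfold Nexp, Plus, Comp; rewrite !Up_val by lia; cbn [Nat.eqb]; unfold Diag, Down, wi;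
  fixidx x q; rewrite ?w_val by lia; cbn [wt]; field; lra.
Qed.

Lemma absw n : Rabs (w t n) <= / (t * t).
Proof. pose proof (w_bounds n). rewrite Rabs_right; lra. Qed.
Lemma abswi n : Rabs (wi t n) <= 1.
Proof. pose proof (wi_bounds n). rewrite Rabs_right; lra. Qed.

Lemma DomA : Dom A' ((/ (t * t)) ^ 2 * ((2 * 1 + 2 * 1) * 1 ^ 2)).
Proof.
  apply Dom_comp. apply Dom_diag, absw. apply Dom_comp.
  apply Dom_plus; apply Dom_down; lia. apply Dom_diag, abswi.
Qed.

Lemma Dom_ud d l : (d < 4)%nat -> (l <= 1)%nat -> Dom (Comp (Up d) (Down l)) (1 * 1).
Proof. intros. apply Dom_comp; [apply Dom_up|apply Dom_down]; auto. Qed.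

Lemma DomB : Dom B' ((/ (t * t)) ^ 2 * ((2 * (1 * 1) + 2 * (2 * (1 * 1) + 2 * (2 * (1 * 1)
   + 2 * (2 * (1 * 1) + 2 * (1 * 1))))) * 1 ^ 2)).
Proof.
  apply Dom_comp. apply Dom_diag, absw. apply Dom_comp. 2: apply Dom_diag, abswi.
  repeat apply Dom_plus; apply Dom_ud; lia.
Qed.

Lemma abst : forall n : nat, Rabs (- t) <= t.
Proof. intros. rewrite Rabs_Ropp, Rabs_right; lra. Qed.
Lemma abstt : forall n : nat, Rabs (- (t * t)) <= t.
Proof. intros. rewrite Rabs_Ropp, Rabs_right; nra. Qed.

Lemma Dom_dd a b : (a <= 1)%nat -> (b <= 1)%nat -> Dom (Comp (Down a) (Down b)) (1 * 1).
Proof. intros. apply Dom_comp; apply Dom_down; auto. Qed.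

Lemma DomN : Dom N' (2 * (1 * (t ^ 2 * (1 * 1))) +
   2 * (1 * (2 * (t ^ 2 * (1 * 1)) + 2 * (2 * (t ^ 2 * (1 * 1)) + 2 * (t ^ 2 * (1 * 1)))))).
Proof.
  apply (Dom_ext Nexp). intros; symmetry; apply Nexp_eq.
  apply Dom_plus. apply Dom_comp. apply Dom_up; lia. apply Dom_comp.
  apply Dom_diag, abst. apply Dom_dd; lia.
  apply Dom_comp. apply Dom_up; lia.
  apply Dom_plus. apply Dom_comp. apply Dom_diag, abst. apply Dom_dd; lia.
  apply Dom_plus; (apply Dom_comp; [apply Dom_diag, abstt| apply Dom_dd; lia]).
Qed.

Lemma lin_N0 : lin N0.
Proof. intros x y a b. apply functional_extensionality. intro n. unfold N0.
  destruct (Nat.eqb _ 0); [|destruct (Nat.eqb _ 2)]; ring. Qed.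

Lemma linA : lin A'.
Proof. unfold A', Aop. repeat first [apply lin_comp | apply lin_plus | apply lin_diag | apply lin_down]. Qed.
Lemma linB : lin B'.
Proof. unfold B', Bop. repeat first [apply lin_comp | apply lin_plus | apply lin_diag | apply lin_down | apply lin_up]. Qed.
Lemma linN : lin N'.
Proof. unfold N'. repeat first [apply lin_comp | apply lin_diag | apply lin_N0]. Qed.

Lemma w_nn n : 0 <= w t n.
Proof. pose proof (w_bounds n). lra. Qed.
Lemma wi_nn n : 0 <= wi t n.
Proof. pose proof (wi_bounds n). lra. Qed.

Lemma posA : positive_op A'.
Proof. intros x _ Hx. revert x Hx. unfold A', Aop.
  repeat first [apply pos_comp | apply pos_plus | apply pos_down | apply pos_diag; [apply w_nn || apply wi_nn]]. Qed.
Lemma posB : positive_op B'.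
Proof. intros x _ Hx. revert x Hx. unfold B', Bop.
  repeat first [apply pos_comp | apply pos_plus | apply pos_down | apply pos_up | apply pos_diag; [apply w_nn || apply wi_nn]]. Qed.

Lemma all_props :
  bounded_op A' /\ bounded_op B' /\ bounded_op N' /\
  positive_op A' /\ positive_op B' /\
  commutator_eq A' B' N' /\ nilpotent_index3 N' /\
  opnorm_le A' (100 / t ^ 3) /\ opnorm_le B' (100 / t ^ 3) /\ opnorm_le N' (100 * t).
Proof.
  assert (Hs : 1 <= / t). { rewrite <- Rinv_1. apply Rinv_le_contravar; lra. }
  assert (E1 : / (t * t) = / t * / t) by (field; lra).
  assert (E2 : 100 / t ^ 3 = 100 * (/ t) ^ 3) by (field; lra).
  split; [exact (bounded_of _ _ DomA linA)|].
  split; [exact (bounded_of _ _ DomB linB)|].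
  split; [exact (bounded_of _ _ DomN linN)|].
  split; [exact posA|]. split; [exact posB|].
  split; [intros x _; apply comm'|].
  split; [split; [intros x _; apply nil3| exists e1; split; [apply l2_e1|apply nil2]]|].
  split; [apply (opnorm_of _ _ _ DomA); apply sqrt_le_of;
          [rewrite E2; apply helper_s0; lra| rewrite E1, E2; apply helper_s; lra]|].
  split; [apply (opnorm_of _ _ _ DomB); apply sqrt_le_of;
          [rewrite E2; apply helper_s0; lra| rewrite E1, E2; apply helper_s; lra]|].
  apply (opnorm_of _ _ _ DomN); apply sqrt_le_of. lra. nra.
Qed.

End W.

Theorem theorem3p2 :
  (exists A B N : op,
      bounded_op A /\ bounded_op B /\ bounded_op N /\
      positive_op A /\ positive_op B /\
      commutator_eq A B N /\ nilpotent_index3 N) /\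
  (exists K : R, 0 < K /\
     forall eps : R, 0 < eps < 1 ->
       exists A B N : op,
         bounded_op A /\ bounded_op B /\ bounded_op N /\
         positive_op A /\ positive_op B /\
         commutator_eq A B N /\ nilpotent_index3 N /\
         opnorm_le A (K / eps ^ 3) /\ opnorm_le B (K / eps ^ 3) /\
         opnorm_le N (K * eps)).
Proof.
  split.
  - assert (H : 0 < 1 / 2 <= 1) by lra.
    destruct (all_props _ H) as (H1 & H2 & H3 & H4 & H5 & H6 & H7 & _).
    exists (A' (1/2)), (B' (1/2)), (N' (1/2)). tauto.
  - exists 100. split. lra. intros eps He.
    assert (H : 0 < eps <= 1) by lra.
    exists (A' eps), (B' eps), (N' eps). apply all_props. exact H.
Qed.
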